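(* Let $n\ge 1$ and let $\mathbb{R}^n_t$ denote $\mathbb{R}^n$ equipped with a nondegenerate symmetric bilinear form $\eta$ of signature $(-t,+s)$, $t+s=n$, with pseudo-orthogonal group $O(t,n-t)=\{R\in GL(n,\mathbb{R}) : \eta(Rx,Ry)=\eta(x,y)\ \forall x,y\}$. Let $1\le m\le n$, let $u_1,\dots,u_m\in\mathbb{R}^n_t$ be linearly independent, and let $\mathsf{lat}=\{\sum_{i=1}^m z_i u_i : z_i\in\mathbb{Z}\}$ with $\mathbb{R}$-linear span $W=[\mathsf{lat}]$. Define $G_{\mathsf{lat}}=\{R\in O(t,n-t) : R\,\mathsf{lat}=\mathsf{lat}\}$ and $eG_{\mathsf{lat}}=\{R\in O(t,n-t) : R\,\mathsf{lat}\subset\mathsf{lat}\}$. If $ind(\mathsf{lat})=0$ or $ind(\mathsf{lat})=m$, then $eG_{\mathsf{lat}}=G_{\mathsf{lat}}$.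
   Context: The index $ind(V)$ of a vector subspace $V\subset\mathbb{R}^n_t$ is the maximum of the dimensions of subspaces $V'\subset V$ on which the restriction $\eta|_{V'}$ is negative definite; thus $ind(V)=0$ iff $\eta|_V$ is positive definite, and $ind(V)=\dim V$ iff $\eta|_V$ is negative definite. The index of the lattice is $ind(\mathsf{lat}):=ind(W)$, where $W$ is the $\mathbb{R}$-linear span of $\mathsf{lat}$ (so $\dim W=m$).
   Formalization: The case $ind(\mathsf{lat})=0$ means $\eta|_W$ positive definite, so spans W on which $\eta|_W$ is positive semidefinite but degenerate are excluded. The paper assumes this as well. *)

(* Defs.v *)
From mathcomp Require Import all_boot all_order all_algebra.
From mathcomp Require Import reals.
Set Implicit Arguments. Unset Strict Implicit. Unset Printing Implicit Defensive.
Import Order.TTheory GRing.Theory Num.Theory.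
Local Open Scope ring_scope.

Section Defs.
Variable R : realType.

Definition etaJ (n t : nat) : 'M[R]_n :=
  \matrix_(i, j) (if i == j then (if (i < t)%N then -1 else 1) else 0).

Definition eta (n t : nat) (x y : 'cV[R]_n) : R :=
  ((x^T *m etaJ n t) *m y) 0 0.

Definition in_O (n t : nat) (M : 'M[R]_n) : Prop :=
  M \in unitmx /\ forall x y : 'cV[R]_n, eta t (M *m x) (M *m y) = eta t x y.

Definition lin_indep (n m : nat) (u : 'I_m -> 'cV[R]_n) : Prop :=
  forall c : 'I_m -> R, \sum_(i < m) c i *: u i = 0 -> forall i, c i = 0.

Definition in_lat (n m : nat) (u : 'I_m -> 'cV[R]_n) (v : 'cV[R]_n) : Prop :=
  exists z : 'I_m -> int, v = \sum_(i < m) (z i)%:~R *: u i.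

Definition in_span (n m : nat) (u : 'I_m -> 'cV[R]_n) (v : 'cV[R]_n) : Prop :=
  exists c : 'I_m -> R, v = \sum_(i < m) c i *: u i.

(* eta restricted to W is positive definite, i.e. ind(lat) = 0 *)
Definition pos_def_on_span (n t m : nat) (u : 'I_m -> 'cV[R]_n) : Prop :=
  forall w, in_span u w -> w != 0 -> 0 < eta t w w.

(* eta restricted to W is negative definite, i.e. ind(lat) = m = dim W *)
Definition neg_def_on_span (n t m : nat) (u : 'I_m -> 'cV[R]_n) : Prop :=
  forall w, in_span u w -> w != 0 -> eta t w w < 0.

Definition in_eG (n t m : nat) (u : 'I_m -> 'cV[R]_n) (M : 'M[R]_n) : Prop :=
  in_O t M /\ forall v, in_lat u v -> in_lat u (M *m v).

Definition in_G (n t m : nat) (u : 'I_m -> 'cV[R]_n) (M : 'M[R]_n) : Prop :=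
  in_O t M /\ (forall v, in_lat u v -> in_lat u (M *m v))
           /\ (forall v, in_lat u v -> exists w, in_lat u w /\ M *m w = v).

End Defs.

(* Main.v *)
Require Import Defs.
From mathcomp Require Import all_boot all_order all_algebra.
From mathcomp Require Import reals boolp.
Set Implicit Arguments. Unset Strict Implicit. Unset Printing Implicit Defensive.
Import Order.TTheory GRing.Theory Num.Theory.
Local Open Scope ring_scope.

Section Aux.
Variable R : realType.
Variables n m : nat.
Variable u : 'I_m -> 'cV[R]_n.

Definition Umx : 'M[R]_(n, m) := \matrix_(k, j) u j k 0.

Lemma Umul (c : 'cV[R]_m) : Umx *m c = \sum_j c j 0 *: u j.
Proof.
apply/matrixP => k l; rewrite !mxE summxE; apply: eq_bigr => j _.
by rewrite !mxE (ord1 l) mulrC.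
Qed.

Lemma lat_mx v : in_lat u v <-> exists z : 'cV[int]_m, v = Umx *m map_mx intr z.
Proof.
split.
  move=> [z ->]; exists (\col_j z j); rewrite Umul; apply: eq_bigr => j _.
  by rewrite !mxE.
move=> [z ->]; exists (fun j => z j 0); rewrite Umul; apply: eq_bigr => j _.
by rewrite !mxE.
Qed.

Lemma Ucol j : Umx *m delta_mx j 0 = u j.
Proof. by rewrite -colE; apply/matrixP => k l; rewrite !mxE (ord1 l). Qed.

Lemma entry_delta (X : 'M[R]_n) i j : X i j = (delta_mx (0 : 'I_1) i *m X *m delta_mx j (0 : 'I_1)) 0 0.
Proof. by rewrite -rowE -colE !mxE. Qed.

End Aux.

Theorem theorem1 (R : realType) (n t m : nat) (u : 'I_m -> 'cV[R]_n) :
  (1 <= n)%N -> (t <= n)%N -> (1 <= m)%N -> (m <= n)%N ->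
  lin_indep u ->
  (pos_def_on_span t u \/ neg_def_on_span t u) ->
  forall M : 'M[R]_n, in_eG t u M <-> in_G t u M.
Proof.
move=> _ _ _ _ Hli Hdef M; split; last by case=> HO [Hl _].
case=> HO Hl; have [Hunit Heta] := HO.
have Hz : forall j, exists z : 'cV[int]_m, M *m u j = Umx u *m map_mx intr z.
  move=> j; apply/lat_mx; apply: Hl; apply/lat_mx; exists (delta_mx j 0).
  rewrite -[LHS](Ucol u j); congr (_ *m _); apply/matrixP => a b; rewrite !mxE.
  by case: (_ && _).
have [z Hzj] := choice Hz.
pose A : 'M[int]_m := \matrix_(i, j) z j i 0.
pose Ar := map_mx (intr : int -> R) A.
pose U := Umx u.
pose J := @etaJ R n t.
have MU : M *m U = U *m Ar.
  apply/matrixP => k j; have := congr1 (fun X : 'M[R]_(n,1) => X k 0) (Hzj j).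
  rewrite !mxE => HH; rewrite (eq_bigr (fun l => M k l * u j l 0)); last by move=> l _; rewrite !mxE.
  rewrite HH; apply: eq_bigr => l _; rewrite !mxE //.
have MJM : M^T *m J *m M = J.
  apply/matrixP => i j; rewrite [LHS]entry_delta [RHS]entry_delta.
  have := Heta (delta_mx i 0) (delta_mx j 0); rewrite /eta.
  by rewrite !trmx_mul !trmx_delta !mulmxA.
pose G := U^T *m J *m U.
have AGA : Ar^T *m G *m Ar = G.
  have E1 : Ar^T *m G *m Ar = (U *m Ar)^T *m J *m (U *m Ar)
    by rewrite trmx_mul /G !mulmxA.
  have E2 : M^T *m (J *m (M *m U)) = J *m U by rewrite !mulmxA MJM.
  by rewrite E1 -MU trmx_mul -!mulmxA E2 /G !mulmxA.
have dG : \det G != 0.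
  apply/negP => /det0P [v vn0 vG].
  pose w := U *m v^T.
  have ws : in_span u w.
    exists (fun j => v 0 j); rewrite /w /U Umul.
    by apply: eq_bigr => j _; rewrite !mxE.
  have wn0 : w != 0.
    apply/negP => /eqP w0; move/negP: vn0; apply; apply/eqP/matrixP => a b.
    rewrite (ord1 a) mxE; apply: (Hli (fun j => v 0 j)).
    rewrite -[RHS]w0 /w /U Umul; by apply: eq_bigr => j _; rewrite !mxE.
  have e0 : eta t w w = 0.
    have E : (U *m v^T)^T *m J *m (U *m v^T) = v *m G *m v^T
      by rewrite trmx_mul trmxK /G !mulmxA.
    by rewrite /eta /w E vG mul0mx mxE.
  case: Hdef => [Hp|Hn].
    by have := Hp w ws wn0; rewrite e0 ltxx.
  by have := Hn w ws wn0; rewrite e0 ltxx.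
have dA2 : \det A ^+ 2 = 1.
  apply: (@intr_inj R); rewrite rmorphXn rmorph1 -det_map_mx -/Ar.
  apply: (mulIf dG); rewrite mul1r -{2}AGA !det_mulmx det_tr.
  by rewrite expr2 mulrAC.
have Au : A \in unitmx.
  by rewrite unitmxE; apply/GRing.unitrP; exists (\det A); rewrite -expr2 dA2.
split; first by [].
split; first by [].
move=> v /lat_mx [y ->].
exists (U *m map_mx intr (invmx A *m y)); split.
  by apply/lat_mx; eexists; reflexivity.
by rewrite mulmxA MU -mulmxA /Ar -map_mxM mulmxA mulmxV // mul1mx.
Qed.
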